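(* Assume the setting in the context (in particular the Causal Faithfulness Condition). Let $x_i,x_j,x_k,x_u\in X$ be distinct. Suppose that $x_k$ is a parent of $x_i$ or a parent of $x_j$, that $x_u$ is an ancestor of $x_i$, and that $x_u\perp\!\!\!\perp x_k\mid x_i$. Then $x_k$ is a parent of $x_j$.
   Context: Model: $X$ is a finite set of observed random variables and $U$ a finite set of unobserved random variables; $V=X\cup U$ and $G=(V,E)$ is a DAG on $V$. Each $v_i\in V$ satisfies $v_i=\sum_{x_j\in \mathrm{pa}(v_i)\cap X} f^{(i)}_j(x_j)+\sum_{u_k\in\mathrm{pa}(v_i)\cap U} f^{(i)}_k(u_k)+n_i$, where the $f$'s are nonlinear functions and the external noises $n_i$ are jointly independent. ''Parent'', ''ancestor'', ''path'', ''d-separation'' refer to $G$. Causal Faithfulness Condition (CFC): any conditional independence among variables of $V$ that is not entailed by d-separation in $G$ does not hold. $\perp\!\!\!\perp$ denotes statistical independence. *)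

(* Defs.v *)
From HB Require Import structures.
From mathcomp Require Import all_boot all_order all_algebra.
From mathcomp Require Import all_classical all_reals all_analysis.
Set Implicit Arguments. Unset Strict Implicit. Unset Printing Implicit Defensive.
Import Order.TTheory GRing.Theory Num.Theory.
Local Open Scope classical_set_scope.
Local Open Scope ring_scope.

Definition acyclic (V : finType) (E : rel V) : Prop :=
  forall x y : V, E x y -> ~~ connect E y x.

Definition is_parent (V : finType) (E : rel V) (a b : V) : bool := E a b.

Definition is_ancestor (V : finType) (E : rel V) (a b : V) : bool :=
  [exists w, E a w && connect E w b].

Definition d_connected (V : finType) (E : rel V) (Z : {set V}) (a b : V) : Prop :=
  exists s : seq V,
    [/\ [/\ (0 < size s)%N, nth a s 0 = a & nth a s (size s).-1 = b], uniq s,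
        (forall k, (k.+1 < size s)%N ->
            E (nth a s k) (nth a s k.+1) || E (nth a s k.+1) (nth a s k))
      & (forall k, (0 < k)%N -> (k.+1 < size s)%N ->
            let l := nth a s k.-1 in
            let m := nth a s k in
            let r := nth a s k.+1 in
            if E l m && E r m
            then (exists2 z, z \in Z & connect E m z)
            else m \notin Z)].

Definition d_separated (V : finType) (E : rel V) (Z : {set V}) (a b : V) : Prop :=
  ~ d_connected E Z a b.

Definition bounded_fun (R : realType) (f : R -> R) : Prop :=
  exists M : R, forall x, `|f x| <= M.

(* Conditional independence of real random variables X and Y given Z:
   for every bounded Borel f, a version of E[f(X) | Y, Z] can be chosen as a
   (bounded Borel) function of Z alone, i.e.
   E[f(X) 1_{Y in B1, Z in B2}] = E[phi(Z) 1_{Y in B1, Z in B2}] for all Borel B1, B2. *)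
Definition cond_indep d (T : measurableType d) (R : realType) (P : probability T R)
    (X Y Z : T -> R) : Prop :=
  forall f : R -> R, measurable_fun setT f -> bounded_fun f ->
  exists phi : R -> R,
    [/\ measurable_fun setT phi, bounded_fun phi &
      forall B1 B2 : set R, measurable B1 -> measurable B2 ->
        (\int[P]_x ((f (X x) * \1_(Y @^-1` B1 `&` Z @^-1` B2) x)%:E)
         = \int[P]_x ((phi (Z x) * \1_(Y @^-1` B1 `&` Z @^-1` B2) x)%:E))%E].

Definition mutually_indep d (T : measurableType d) (R : realType) (P : probability T R)
    (I : finType) (N : I -> T -> R) : Prop :=
  forall (J : {set I}) (B : I -> set R), (forall j, measurable (B j)) ->
    P (\bigcap_(j in [set j | j \in J]) (N j @^-1` B j))
    = (\prod_(j in J) P (N j @^-1` B j))%E.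

Definition nonlinear (R : realType) (f : R -> R) : Prop :=
  ~ (exists a b : R, forall x, f x = a * x + b).

(* Main.v *)
Require Import Defs.
From HB Require Import structures.
From mathcomp Require Import all_boot all_order all_algebra.
From mathcomp Require Import all_classical all_reals all_analysis.
Import Order.TTheory GRing.Theory Num.Theory.

From mathcomp Require Import zify.
Set Implicit Arguments.

Section G.
Variables (V : finType) (E : rel V).
Hypothesis hdag : acyclic E.

Lemma cc_noncoll m r : E m r -> E r m = false.
Proof.
move=> hmr; apply/negP => hrm.
by move: (hdag hmr); rewrite (connect1 hrm).
Qed.

Lemma cc_conn1 c a p : path E a p -> uniq (a :: p) -> c \notin (a :: p) ->
  d_connected E [set c]%SET a (last a p).
Proof.
move=> hp hu hc; exists (a :: p); split => //.
- split => //; by rewrite (nth_last a (a :: p)).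
- move=> k hk; apply/orP; left; exact: (pathP a hp k hk).
- move=> [|k] // _ hk /=.
  have hmr : E (nth a p k) (nth a p k.+1) by exact: (pathP a hp k.+1 hk).
  rewrite (cc_noncoll hmr) andbF finset.in_set1.
  apply/negP => /eqP heq; move: hc; rewrite -heq.
  have : nth a (a :: p) k.+1 \in a :: p by apply: mem_nth; rewrite /= ltnS ltnW.
  by move=> /= ->.
Qed.

Lemma cc_conn2 c a p b : path E a p -> uniq (rcons (a :: p) b) ->
  E b (last a p) -> c = last a p -> (0 < size p)%N ->
  d_connected E [set c]%SET a b.
Proof.
move=> hp hu hb hc hs; rewrite rcons_uniq in hu; case/andP: hu => hbn hu.
have hup : uniq p by case/andP: hu.
have hlast : last a p = nth a p (size p).-1 by rewrite nth_last.
have hn : forall k, nth a (a :: rcons p b) k = if (k < (size p).+1)%N then nth a (a :: p) k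
   else if k == (size p).+1 then b else a by move=> k; exact: (nth_rcons a (a :: p) b k).
exists (rcons (a :: p) b); split.
- split; first by rewrite size_rcons.
  + by [].
  + by rewrite size_rcons /= nth_rcons /= ltnn eqxx.
- by rewrite rcons_uniq hbn.
- move=> k; rewrite size_rcons /= ltnS => hk.
  rewrite !hn !nth_rcons /=.
  case: (ltngtP k (size p)) hk => [hlt _|hgt hk|-> _].
  + rewrite ltnS (ltnW hlt); apply/orP; left; exact: (pathP a hp k hlt).
  + by move: hk hgt; clear; lia.
  + rewrite ltnSn; apply/orP; right.
    have -> : nth a (a :: p) (size p) = last a p by exact: (nth_last a (a :: p)).
    exact: hb.
- move=> [|k] // _; rewrite size_rcons /= !ltnS => hk.
  rewrite !hn !nth_rcons /= !ltnS.
  case: (ltngtP k.+1 (size p)) hk => [hlt _|hgt hk|heq _].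
  + have hmr : E (nth a p k) (nth a p k.+1) by exact: (pathP a hp k.+1 hlt).
    rewrite (cc_noncoll hmr) andbF finset.in_set1 hc hlast nth_uniq //.
    * by move: hlt; case: (size p) => // n; rewrite /= ltnS => h; rewrite neq_ltn h.
    * by rewrite ltnW.
    * by rewrite ltn_predL.
  + by move: hk hgt; clear; lia.
  + have hk' : (k < size p)%N by rewrite -heq.
    rewrite (ltnW hk').
    have hm : nth a p k = last a p by rewrite hlast -heq.
    rewrite (pathP a hp k hk') /= hm hb; exists c; first by rewrite finset.in_set1.
    by rewrite hc.
Qed.
End G.

Lemma cc_split_path (V : finType) (E : rel V) (c k : V) : c != k -> forall p a,
  path E a p -> last a p = c ->
  connect [rel x y | E x y && (y != k)] a c \/ connect [rel x y | E x y && (y != c)] a k.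
Proof.
move=> hck; elim=> [|y p IH] a /=.
  by move=> _ ->; left; exact: connect0.
case/andP=> hay hp hl.
case: (eqVneq y k) => [hyk|hyk].
  by right; apply: connect1; rewrite /= -hyk hay /= hyk eq_sym.
case: (eqVneq y c) => [hyc|hyc].
  by left; apply: connect1; rewrite /= -hyc hay /= hyc.
case: (IH y hp hl) => h; [left|right]; apply: connect_trans h;
  apply: connect1; by rewrite /= hay ?hyk ?hyc.
Qed.

Lemma cc_path_avoid (V : finType) (E : rel V) (k : V) : forall p a,
  path [rel x y | E x y && (y != k)] a p -> k \notin p.
Proof.
elim=> [|y p IH] a //= /andP [/andP [_ hy] hp].
by rewrite in_cons negb_or eq_sym hy (IH y hp).
Qed.

Lemma cc_graph_main (V : finType) (E : rel V) (hdag : acyclic E) (xi xk xu : V) :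
  xi != xk -> xu != xi -> xu != xk -> E xk xi -> is_ancestor E xu xi ->
  d_connected E [set xi]%SET xu xk.
Proof.
move=> hik hui huk hki /existsP [w /andP [huw hwi]].
have : connect E xu xi by apply: connect_trans (connect1 huw) hwi.
case/connectP=> p hp hl.
case: (@cc_split_path V E xi xk hik p xu hp (esym hl)).
- case/connectP=> q hq hlq.
  case: (shortenP hq) hlq => q' hq' huq' _ hlq.
  have hE : path E xu q' by apply: sub_path hq' => x y /andP [].
  have hkq : xk \notin q' by exact: cc_path_avoid hq'.
  apply: (@cc_conn2 V E hdag xi xu q' xk hE).
  + by rewrite rcons_uniq in_cons negb_or eq_sym huk hkq.
  + by rewrite -hlq.
  + by rewrite hlq.
  + by move: hlq; case: q' {hq' huq' hE hkq} => //= hl'; rewrite hl' eqxx in hui.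
- case/connectP=> q hq hlq.
  case: (shortenP hq) hlq => q' hq' huq' _ hlq.
  have hE : path E xu q' by apply: sub_path hq' => x y /andP [].
  have hiq : xi \notin q' by exact: cc_path_avoid hq'.
  rewrite hlq; apply: cc_conn1 => //.
  by rewrite in_cons negb_or eq_sym hui hiq.
Qed.

Local Open Scope classical_set_scope.
Local Open Scope ring_scope.

Theorem corollary2
  (V : finType) (E : rel V) (X : {set V})
  (R : realType) (d : measure_display) (T : measurableType d) (P : probability T R)
  (var noise : V -> T -> R) (f : V -> V -> R -> R)
  (* G = (V, E) is a DAG; X observed, U = V \ X unobserved *)
  (hdag : acyclic E)
  (* additive nonlinear structural equations with jointly independent noises *)
  (hf_meas : forall v w, measurable_fun setT (f v w))
  (hf_nonlin : forall v w, E w v -> nonlinear (f v w))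
  (hnoise_meas : forall v, measurable_fun setT (noise v))
  (hnoise_indep : mutually_indep P noise)
  (hvar_meas : forall v, measurable_fun setT (var v))
  (hsem : forall v t,
     var v t = \sum_(w | E w v && (w \in X)) f v w (var w t)
             + \sum_(w | E w v && (w \notin X)) f v w (var w t)
             + noise v t)
  (* Causal Faithfulness Condition (instances with single variables):
     a conditional independence not entailed by d-separation does not hold *)
  (hCFC : forall a b c : V, a != b -> c != a -> c != b ->
     cond_indep P (var a) (var b) (var c) -> d_separated E [set c]%SET a b)
  (xi xj xk xu : V)
  (hxi : xi \in X) (hxj : xj \in X) (hxk : xk \in X) (hxu : xu \in X)
  (hdist : uniq [:: xi; xj; xk; xu])
  (hpar : is_parent E xk xi || is_parent E xk xj)
  (hanc : is_ancestor E xu xi)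
  (hci : cond_indep P (var xu) (var xk) (var xi)) :
  is_parent E xk xj.
Proof.
rewrite /is_parent; case hkj: (E xk xj) => //; exfalso.
rewrite /is_parent hkj orbF in hpar.
have hik : xi != xk by apply: contraTneq hdist => ->; rewrite /= !in_cons !eqxx /= ?orbT.
have h1 : xu != xk by apply: contraTneq hdist => ->; rewrite /= !in_cons !eqxx /= ?orbT ?andbF.
have h2 : xi != xu by apply: contraTneq hdist => ->; rewrite /= !in_cons !eqxx /= ?orbT.
have hsep := hCFC xu xk xi h1 h2 hik hci.
apply: hsep.
have h3 : xu != xi by rewrite eq_sym.
exact: (@cc_graph_main V E hdag xi xk xu hik h3 h1 hpar hanc).
Qed.
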